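(* Let $\mathcal{B}$ be a natural correlation basis and $X,Y$ continuous random variables. If $X$ and $Y$ are comonotonic then $\rho^B_{jk}(X,Y)=\delta_{jk}$ for all $j,k\in\mathbb{N}$. If $X$ and $Y$ are countermonotonic then $\rho^B_{jk}(X,Y)=(-1)^j\delta_{jk}$ for all $j,k\in\mathbb{N}$.
   Context: A correlation basis is a complete orthonormal system $\{B_j:j\in\mathbb{N}_0\}$ of $\mathcal{L}^2([0,1])$ with $B_0\equiv1$. It is regular if each $B_j$, $j\ge1$, is (a) piecewise continuous and strictly monotonic (there is a finite partition of $[0,1]$ into intervals on whose interiors $B_j$ is continuous and strictly monotonic) and (b) regular (continuous on $[0,1]$, continuously differentiable on $(0,1)$ with bounded derivative, and $B_j'(u)=0$ iff $u$ is a turning point). It is natural if it is regular and for every $j\in\mathbb{N}$: (i) $B_j'(u)>0$ on some interval $(1-\epsilon_j,1)$, $\epsilon_j>0$; (ii) $B_j$ has exactly $j-1$ turning points; (iii) $B_j(1-u)=(-1)^jB_j(u)$ for all $u\in[0,1]$. The basis correlation is $\rho^B_{jk}(X,Y)=\rho(B_j(F_X(X)),B_k(F_Y(Y)))$ with $\rho$ Pearson correlation; $\delta_{jk}$ is the Kronecker delta. *)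

(* Defs.v *)
From HB Require Import structures.
From mathcomp Require Import all_boot all_order all_algebra.
From mathcomp Require Import all_classical all_reals all_analysis.
Set Implicit Arguments. Unset Strict Implicit. Unset Printing Implicit Defensive.
Import Order.TTheory GRing.Theory Num.Theory.
Import numFieldNormedType.Exports.
Local Open Scope classical_set_scope.
Local Open Scope ring_scope.

Section defs.
Variable R : realType.

Local Notation leb := (@lebesgue_measure R).
Local Notation I01 := (`[0%R, 1%R]%classic : set R).
Local Notation J01 := (`]0%R, 1%R[%classic : set R).

Definition L2_01 (f : R -> R) : Prop :=
  measurable_fun I01 f /\
  (\int[leb]_(x in I01) ((f x) ^+ 2)%:E < +oo)%E.

Definition inner01 (f g : R -> R) : R :=
  Rintegral leb I01 (fun x => f x * g x).

Definition correlation_basis (B : nat -> R -> R) : Prop :=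
  (forall j, L2_01 (B j)) /\
  (forall j k, inner01 (B j) (B k) = (j == k)%:R) /\
  (* completeness: only the (a.e.) zero function is orthogonal to all B_j *)
  (forall f, L2_01 f -> (forall j, inner01 f (B j) = 0) ->
     {ae leb, forall x, I01 x -> f x = 0}) /\
  (forall u, u \in `[0, 1] -> B 0%N u = 1).

Definition strictly_monotone_on (A : set R) (f : R -> R) : Prop :=
  {in A &, {homo f : x y / x < y}} \/ {in A &, {homo f : x y / y < x}}.

Definition turning_point (f : R -> R) (u : R) : Prop :=
  (u \in `]0, 1[) /\
  exists e : R, 0 < e /\
    (({in (`]u - e, u]) &, {homo f : x y / x < y}} /\
     {in (`[u, u + e[) &, {homo f : x y / y < x}}) \/
    ({in (`]u - e, u]) &, {homo f : x y / y < x}} /\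
     {in (`[u, u + e[) &, {homo f : x y / x < y}})).

Definition piecewise_cont_strict_mono (f : R -> R) : Prop :=
  exists (n : nat) (t : nat -> R),
    t 0%N = 0 /\ t n = 1 /\
    (forall i, (i < n)%N -> t i < t i.+1) /\
    (forall i, (i < n)%N ->
       {within `]t i, t i.+1[%classic, continuous f} /\
       strictly_monotone_on `]t i, t i.+1[%classic f).

Definition regular_fun (f : R -> R) : Prop :=
  {within I01, continuous f} /\
  (forall u, u \in `]0, 1[ -> derivable f u 1) /\
  {within J01, continuous (derive1 f)} /\
  (exists M : R, forall u, u \in `]0, 1[ -> `|derive1 f u| <= M) /\
  (forall u, u \in `]0, 1[ -> (derive1 f u = 0 <-> turning_point f u)).

Definition regular_basis (B : nat -> R -> R) : Prop :=
  correlation_basis B /\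
  forall j, (0 < j)%N -> piecewise_cont_strict_mono (B j) /\ regular_fun (B j).

Definition natural_basis (B : nat -> R -> R) : Prop :=
  regular_basis B /\
  forall j, (0 < j)%N ->
    (exists2 e : R, 0 < e & forall u, u \in `]1 - e, 1[ -> 0 < derive1 (B j) u) /\
    (exists s : seq R, uniq s /\ size s = j.-1 /\
       forall u, turning_point (B j) u <-> u \in s) /\
    (forall u, u \in `[0, 1] -> B j (1 - u) = (-1) ^+ j * B j u).

Context {d : measure_display} {T : measurableType d} (P : probability T R).

Definition F_ (X : {RV P >-> R}) (x : R) : R := fine (cdf X x).

Definition continuous_rv (X : {RV P >-> R}) : Prop := continuous (F_ X).

Definition comonotonic_set (A : set (R * R)) : Prop :=
  forall p q, A p -> A q ->
    (p.1 <= q.1 /\ p.2 <= q.2) \/ (q.1 <= p.1 /\ q.2 <= p.2).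

Definition countermonotonic_set (A : set (R * R)) : Prop :=
  forall p q, A p -> A q ->
    (p.1 <= q.1 /\ q.2 <= p.2) \/ (q.1 <= p.1 /\ p.2 <= q.2).

(* (X,Y) is comonotonic iff it has a comonotonic support, i.e. some
   comonotonic set A with P((X,Y) in A) = 1 (Dhaene et al.) *)
Definition comonotonic (X Y : {RV P >-> R}) : Prop :=
  exists A, comonotonic_set A /\ {ae P, forall w, A (X w, Y w)}.

Definition countermonotonic (X Y : {RV P >-> R}) : Prop :=
  exists A, countermonotonic_set A /\ {ae P, forall w, A (X w, Y w)}.

Definition pearson (U V : T -> R) : R :=
  fine (covariance P U V) / Num.sqrt (fine 'V_P[U] * fine 'V_P[V]).

Definition basis_corr (B : nat -> R -> R) (j k : nat) (X Y : {RV P >-> R}) : R :=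
  pearson (fun w => B j (F_ X (X w))) (fun w => B k (F_ Y (Y w))).

End defs.

(* Main.v *)
Require Import Defs.
From HB Require Import structures.
From mathcomp Require Import all_boot all_order all_algebra.
From mathcomp Require Import all_classical all_reals all_analysis.
From mathcomp Require Import lra.
Set Implicit Arguments. Unset Strict Implicit. Unset Printing Implicit Defensive.
Import Order.TTheory GRing.Theory Num.Theory Num.Def.
Import numFieldNormedType.Exports.
Local Open Scope classical_set_scope.
Local Open Scope ring_scope.
Section c01.
Variable R : realType.
Definition c01 (x : R) : R := minr (maxr x 0) 1.
Lemma c01_cases x : (x <= 0 /\ c01 x = 0) \/ (0 < x <= 1 /\ c01 x = x) \/
  (1 < x /\ c01 x = 1).
Proof.
rewrite /c01 maxEle; case: (leP x 0) => x0.
  by left; split => //; rewrite minEle ler01.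
rewrite minEle; case: (leP x 1) => x1.
  by right; left; split => //; apply/andP; split.
by right; right.
Qed.
Ltac cc x := case: (c01_cases x) => [[? ->]|[[/andP[? ?] ->]|[? ->]]].
Lemma c01_nd : {homo c01 : x y / x <= y}.
Proof. move=> x y xy; cc x; cc y; lra. Qed.
Lemma c01_cont : continuous c01.
Proof.
move=> x.
have := @continuous_min R R (fun x => maxr x 0) (cst 1) x.
have := @continuous_max R R id (cst 0) x.
move=> h1 h2; apply: h2; last exact: cvg_cst.
apply: h1; [exact: cvg_id | exact: cvg_cst].
Qed.
Lemma c01_rc : right_continuous c01.
Proof. move=> x; apply: cvg_at_right_filter; exact: c01_cont. Qed.
HB.instance Definition _ := isCumulative.Build R _ R c01 c01_nd c01_rc.
Lemma leb_oc_I (a b : R) : a < b ->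
  (@lebesgue_measure R) (`]a, b] `&` `]0, 1]) = (c01 b - c01 a)%:E.
Proof.
move=> ab; have [h|h] := ltP (maxr a 0) (minr b 1).
- have -> : `]a, b] `&` `]0, 1] = `](maxr a 0), (minr b 1)]%classic.
    apply/seteqP; split => x /=; rewrite !in_itv/= ?gt_max ?le_min.
      by move=> [/andP[-> ->] /andP[-> ->]].
    by move=> /andP[/andP[-> ->] /andP[-> ->]].
  rewrite lebesgue_measure_itv/= lte_fin h -EFinB; congr (_%:E).
  move: h; rewrite maxEle minEle; cc a; cc b; case: (leP a 0); case: (leP b 1); lra.
- have -> : `]a, b] `&` `]0, 1] = set0.
    apply/seteqP; split => x //=; rewrite !in_itv/=.
    move=> [/andP[ax xb] /andP[x0 x1]]; move: h.
    rewrite maxEle minEle; case: (leP a 0); case: (leP b 1); lra.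
  rewrite measure0; congr (_%:E).
  move: h; rewrite maxEle minEle; cc a; cc b; case: (leP a 0); case: (leP b 1); lra.
Qed.
End c01.
Section K4.
Variable R : realType.
Local Notation leb := (@lebesgue_measure R).
Lemma m_oc01 : measurable (`]0, 1]%classic : set R).
Proof. exact: measurable_itv. Qed.
Lemma lsf_leb (A : set R) : measurable A ->
  lebesgue_stieltjes_measure (c01 (R:=R)) A = leb (A `&` `]0, 1]).
Proof.
move=> mA.
rewrite (@lebesgue_stieltjes_measure_unique _ _ (mrestr leb m_oc01)) //.
move=> _ [[a b] _ <-] /=.
rewrite /lebesgue_stieltjes_measure /measure_extension/=.
rewrite measurable_mu_extE/=; last exact: is_ocitv.
rewrite /mrestr.
have [ab|ba] := ltP a b.
  by rewrite wlength_itv_bnd ?ltW// leb_oc_I.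
by rewrite set_itv_ge ?wlength0 ?set0I ?measure0// bnd_simp -leNgt.
Qed.
Lemma leb_sub01 (A : set R) : measurable A -> A `<=` `[0, 1] ->
  leb A = leb (A `&` `]0, 1]).
Proof.
move=> mA A01; apply/eqP; rewrite eq_le; apply/andP; split; last first.
  apply: le_measure; rewrite ?inE//; try exact: subIsetl.
  by apply: measurableI => //; exact: measurable_itv.
have mI : measurable (A `&` `]0, 1]) by apply: measurableI => //; exact: measurable_itv.
apply: (@le_trans _ _ (leb ((A `&` `]0, 1]) `|` [set 0]))).
  apply: le_measure; rewrite ?inE//; try exact: (measurableU mI (measurable_set1 (0:R))).
  1: exact (measurableU _ _ mI (measurable_set1 (0:R))).
  move=> x Ax; have := A01 _ Ax; rewrite /= !in_itv/= => /andP[x0 x1].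
  have [->|xn0] := eqVneq x 0; first by right.
  by left; split => //=; rewrite x1 andbT lt_neqAle eq_sym xn0.
apply: (le_trans (measureU2 _ _ _)) => //.
by rewrite [X in (_ + X)%E]lebesgue_measure_set1 adde0.
Qed.
End K4.

Section K1.
Context {R : realType} {d : measure_display} {T : measurableType d} (P : probability T R).
Variable X : {RV P >-> R}.
Hypothesis cX : continuous (F_ X).
Local Notation F := (F_ X).
Lemma F_E x : cdf X x = (F x)%:E.
Proof. by rewrite /F_ fineK// fin_num_measure. Qed.
Lemma F_nd : {homo F : x y / x <= y}.
Proof. by move=> x y xy; rewrite /F_ fine_le ?fin_num_measure// cdf_nondecreasing. Qed.
Lemma F_ge0 x : 0 <= F x.
Proof. by rewrite /F_ fine_ge0. Qed.
Lemma F_le1 x : F x <= 1.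
Proof. by rewrite -lee_fin -F_E cdf_le1. Qed.
Lemma F_Ny0 : F @ -oo --> (0:R).
Proof. exact/fine_cvg/cvg_cdfNy0. Qed.
Lemma F_y1 : F @ +oo --> (1:R).
Proof. exact/fine_cvg/cvg_cdfy1. Qed.
Lemma F_near_gt s u : u < F s -> exists2 e : R, 0 < e & forall t, `|s - t| < e -> u < F t.
Proof.
move=> us; have := @cvgr_gt _ _ _ _ _ _ (@cX s) _ us.
move=> H; have [e e0 he] := proj1 (nbhs_ballP _ _) (H _); exists e => // t st; apply: he; by rewrite -ball_normE /ball_/=.
Qed.
Lemma F_near_lt s u : F s < u -> exists2 e : R, 0 < e & forall t, `|s - t| < e -> F t < u.
Proof.
move=> us; have := @cvgr_lt _ _ _ _ _ _ (@cX s) _ us.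
move=> H; have [e e0 he] := proj1 (nbhs_ballP _ _) (H _); exists e => // t st; apply: he; by rewrite -ball_normE /ball_/=.
Qed.
Lemma F_low u : 0 < u -> exists t, F t < u.
Proof.
move=> u0; have := @cvgr_lt _ _ _ _ _ _ F_Ny0 _ u0.
case=> M [_ HM]; exists (M - 1); apply: HM; lra.
Qed.
Lemma F_high u : u < 1 -> exists M, forall t, M < t -> u < F t.
Proof.
move=> u1; have := @cvgr_gt _ _ _ _ _ _ F_y1 _ u1.
case=> M [_ HM]; exists M => t Mt; exact: HM.
Qed.
Lemma K1main u : 0 <= u < 1 -> P [set w | F (X w) <= u] = u%:E.
Proof.
move=> /andP[u0 u1].
pose S := [set x | F x <= u].
have [Sne|S0] := pselect (S !=set0); last first.
  have u00 : u = 0.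
    apply/eqP; rewrite eq_le u0 andbT; rewrite leNgt; apply/negP => /F_low [t Ft].
    by apply: S0; exists t; rewrite /S /= ltW.
  have -> : [set w | F (X w) <= u] = set0.
    by apply/seteqP; split => // w /= Fw; apply: S0; exists (X w).
  by rewrite measure0 u00.
have [M HM] := F_high u1.
have Sub : has_ubound S.
  exists M => x Sx; rewrite leNgt; apply/negP => /HM; rewrite ltNge.
  by move/negP; apply.
have Ssup : has_sup S by split.
pose s := sup S.
have Fsu : F s <= u.
  rewrite leNgt; apply/negP => /F_near_gt [e e0 he].
  have [x Sx sx] := sup_adherent e0 Ssup.
  have xs : x <= s by exact: ub_le_sup.
  have := he x; rewrite ger0_norm ?subr_ge0// ltrBlDr addrC -ltrBlDr => /(_ sx).
  by rewrite ltNge Sx.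
have uFs : u <= F s.
  rewrite leNgt; apply/negP => /F_near_lt [e e0 he].
  have Se : S (s + e / 2).
    rewrite /S /= ltW// he//; rewrite opprD addrA subrr sub0r normrN.
    by rewrite ger0_norm ?divr_ge0 ?ltW// gtr_pMr// invf_lt1// ltr1n.
  have := ub_le_sup Sub Se; rewrite -/s gerDl leNgt => /negP; apply.
  by rewrite divr_gt0.
have -> : [set w | F (X w) <= u] = X @^-1` `]-oo, s].
  apply/seteqP; split => w /=.
    by move=> Fw; rewrite in_itv/=; exact: ub_le_sup.
  by rewrite in_itv/= => /F_nd /le_trans; apply.
have : cdf X s = (F s)%:E by exact: F_E.
rewrite /cdf /distribution /pushforward => ->.
by congr (_%:E); apply/eqP; rewrite eq_le Fsu uFs.
Qed.
Lemma K1 u : P [set w | F (X w) <= u] = (c01 u)%:E.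
Proof.
have [u0|u0] := ltP u 0.
  have -> : [set w | F (X w) <= u] = set0.
    by apply/seteqP; split => // w /= Fw; have := F_ge0 (X w); lra.
  rewrite measure0; case: (c01_cases u) => [[_ ->]|[[/andP[? ?] _]|[? _]]] //; exfalso; lra.
have [u1|u1] := ltP u 1.
  rewrite K1main ?u0//.
  by case: (c01_cases u) => [[? ->]|[[/andP[? ?] ->]|[? ->]]] //; congr (_%:E); lra.
have -> : [set w | F (X w) <= u] = setT.
  by apply/seteqP; split => // w _ /=; rewrite (le_trans (F_le1 _)).
rewrite probability_setT.
by case: (c01_cases u) => [[? ->]|[[/andP[? ?] ->]|[? ->]]] //; congr (_%:E); lra.
Qed.
Definition UX : T -> measurableTypeR R := fun w => F (X w).
Lemma mUX : measurable_fun setT UX.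
Proof.
apply: measurableT_comp => //.
exact: measurable_realfun.continuous_measurable_fun.
Qed.
HB.instance Definition _ := isMeasurableFun.Build _ _ _ _ UX mUX.
Lemma mUle u : measurable [set w | F (X w) <= u].
Proof.
have := mUX measurableT (measurable_itv `]-oo, u]).
by rewrite setTI; congr measurable.

Qed.
Lemma K3 (A : set R) : measurable A ->
  lebesgue_stieltjes_measure (c01 (R:=R)) A = distribution P UX A.
Proof.
move=> mA.
rewrite (@lebesgue_stieltjes_measure_unique _ _ (distribution P UX)) //.
move=> _ [[a b] _ <-] /=.
rewrite /lebesgue_stieltjes_measure /measure_extension/=.
rewrite measurable_mu_extE/=; last exact: is_ocitv.
have [ab|ba] := ltP a b; last first.
  by rewrite set_itv_ge ?wlength0 ?measure0// bnd_simp -leNgt.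
rewrite wlength_itv_bnd ?ltW// /distribution /pushforward.
have -> : UX @^-1` `]a, b] = [set w | F (X w) <= b] `\` [set w | F (X w) <= a].
  apply/seteqP; split => w /=; rewrite /UX in_itv/=.
    by move=> /andP[aw wb]; split => //; rewrite leNgt aw.
  by move=> [wb /negP]; rewrite -ltNge => ->.
have mb := mUle b; have ma := mUle a.
rewrite measureD//; last by rewrite -ge0_fin_numE// fin_num_measure.
rewrite setIidr; last by move=> w /= wa; rewrite (le_trans wa)// ltW.
by rewrite EFinB; congr (_ - _)%E; apply/esym; exact: K1.
Qed.
Local Notation leb := (@lebesgue_measure R).
Lemma K4 (A : set R) : measurable A -> A `<=` `[0, 1] ->
  leb A = distribution P UX A.
Proof.
by move=> mA A01; rewrite leb_sub01// -lsf_leb// K3.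
Qed.
Lemma UX01 w : UX w \in `[0, 1].
Proof. by rewrite in_itv/= /UX F_ge0 F_le1. Qed.
Lemma K5 (g : R -> R) (M : R) : measurable_fun (`[0, 1] : set R) g ->
  (forall x, x \in `[0, 1] -> `|g x| <= M) ->
  ('E_P[fun w => g (F (X w))] = \int[leb]_(x in (`[0%R, 1%R] : set R)) (g x)%:E)%E.
Proof.
move=> mg gM.
have m01 : measurable (`[0, 1]%classic : set R) by exact: measurable_itv.
pose g' : R -> R := g \_ `[0, 1].
have mg' : measurable_fun setT g' by exact/(measurable_restrictT _ m01).
have g'E x : x \in `[0, 1] -> g' x = g x by move=> x01; rewrite /g' patchE mem_set // -(@in_setE R).
have -> : ('E_P[fun w => g (F (X w))] =
    \int[P]_(w in UX @^-1` (`[0%R, 1%R] : set R)) ((EFin \o g') \o UX) w)%E.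
  have -> : UX @^-1` `[0, 1] = setT.
    by apply/seteqP; split => // w _ /=; have := UX01 w; rewrite inE.
  rewrite unlock; apply: eq_integral => w _ /=.
  by rewrite g'E// UX01.
have ig : P.-integrable (UX @^-1` `[0, 1]) ((EFin \o g') \o UX).
  have mpre : measurable (UX @^-1` `[0, 1]).
    by rewrite -[X in measurable X]setTI; exact: mUX.
  apply: measurable_bounded_integrable => //.
  + by rewrite -ge0_fin_numE// fin_num_measure.
  + apply: measurable_funTS; apply: measurableT_comp => //; exact: mUX.
  + exists M; split; first exact: num_real.
    move=> z Mz w _ /=; rewrite g'E ?UX01//.
    by rewrite (le_trans (gM _ (UX01 w)))// ltW.
rewrite -integral_pushforward//; last first.
  exact: (proj2 (@measurable_realfun.measurable_EFinP _ (measurableTypeR R) R setT g') mg').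
rewrite (@eq_measure_integral _ _ _ _ leb); last first.
  by move=> A mA A01; apply/esym; exact: K4.
apply: eq_integral => x; rewrite inE /= => x01 /=; rewrite g'E//.
Qed.
End K1.

Section A.
Context {R : realType} {d : measure_display} {T : measurableType d} (P : probability T R).
Lemma negl_lt (f g : T -> R) :
  (forall q : rat, P.-negligible [set w | f w < ratr q < g w]) ->
  P.-negligible [set w | f w < g w].
Proof.
move=> H.
pose qn (n : nat) : rat := odflt 0%R (unpickle n).
apply: (negligibleS _ (negligible_bigcup (fun n => H (qn n)))).
move=> w /= fg; have [q] := rat_in_itvoo fg; rewrite in_itv/= => qin.
by exists (pickle q) => //; rewrite /qn pickleK.
Qed.
Variables X Y : {RV P >-> R}.
Hypotheses (cX : continuous (F_ X)) (cY : continuous (F_ Y)).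
Local Notation U w := (F_ X (X w)).
Local Notation V w := (F_ Y (Y w)).
Lemma finP (A : set T) : measurable A -> P A = (fine (P A))%:E.
Proof. by move=> mA; rewrite fineK// fin_num_measure. Qed.
Lemma comon_negl : comonotonic X Y ->
  P.-negligible [set w | U w < V w] /\ P.-negligible [set w | V w < U w].
Proof.
case=> A [cA [N [mN PN0 sN]]].
have AN w : ~ N w -> A (X w, Y w).
  by move=> Nw; apply/not_notP => nA; apply: Nw; apply: sN.
have claim u : P.-negligible ([set w | U w <= u] `\` [set w | V w <= u]) /\
               P.-negligible ([set w | V w <= u] `\` [set w | U w <= u]).
  have mU := mUle cX u; have mV := mUle cY u.
  have mE1 : measurable ([set w | U w <= u] `\` [set w | V w <= u]) by exact: measurableD.
  have mE2 : measurable ([set w | V w <= u] `\` [set w | U w <= u]) by exact: measurableD.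
  have PE : P ([set w | U w <= u] `\` [set w | V w <= u]) =
            P ([set w | V w <= u] `\` [set w | U w <= u]).
    rewrite !measureD//; try by rewrite -ge0_fin_numE// fin_num_measure.
    rewrite setIC; congr (_ - _)%E; exact: (etrans (K1 cX u) (esym (K1 cY u))).
  have [h1|h1] := pselect (exists w, ([set w | U w <= u] `\` [set w | V w <= u]) w /\ ~ N w).
    have [h2|h2] := pselect (exists w, ([set w | V w <= u] `\` [set w | U w <= u]) w /\ ~ N w).
      exfalso; case: h1 => w1 [[/= U1 V1] N1]; case: h2 => w2 [[/= V2 U2] N2].
      case: (cA _ _ (AN _ N1) (AN _ N2)) => /= [[_ y12]|[x21 _]].
        by apply: V1; rewrite (le_trans (F_nd Y y12)).
      by apply: U2; rewrite (le_trans (F_nd X x21)).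
    have n2 : P.-negligible ([set w | V w <= u] `\` [set w | U w <= u]).
      by exists N; split => // w E2w; apply/not_notP => Nw; apply: h2; exists w.
    split => //; apply/negligibleP => //; apply: (etrans PE); exact/negligibleP.
  have n1 : P.-negligible ([set w | U w <= u] `\` [set w | V w <= u]).
    by exists N; split => // w E1w; apply/not_notP => Nw; apply: h1; exists w.
  split => //; apply/negligibleP => //; apply: (etrans (esym PE)); exact/negligibleP.
split; apply: negl_lt => q.
  apply: (negligibleS _ (claim (ratr q)).1) => w /= /andP[Uq qV]; split.
    exact: ltW.
  by rewrite leNgt qV.
apply: (negligibleS _ (claim (ratr q)).2) => w /= /andP[Vq qU]; split.
  exact: ltW.
by rewrite leNgt qU.
Qed.
Lemma c01_sym u : c01 u + c01 (1 - u) = 1 :> R.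
Proof.
case: (c01_cases u) => [[? ->]|[[/andP[? ?] ->]|[? ->]]];
case: (c01_cases (1 - u)) => [[? ->]|[[/andP[? ?] ->]|[? ->]]]; lra.
Qed.
Lemma counter_negl : countermonotonic X Y ->
  P.-negligible [set w | U w < 1 - V w] /\ P.-negligible [set w | 1 - V w < U w].
Proof.
case=> A [cA [N [mN PN0 sN]]].
have AN w : ~ N w -> A (X w, Y w).
  by move=> Nw; apply/not_notP => nA; apply: Nw; apply: sN.
have claim u : P.-negligible ([set w | U w <= u] `&` [set w | V w <= 1 - u]) /\
               P.-negligible (~` [set w | U w <= u] `&` ~` [set w | V w <= 1 - u]).
  have mU := mUle cX u; have mV := mUle cY (1 - u).
  have mE1 : measurable ([set w | U w <= u] `&` [set w | V w <= 1 - u]) by exact: measurableI.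
  have mE2 : measurable (~` [set w | U w <= u] `&` ~` [set w | V w <= 1 - u]).
    by apply: measurableI; exact: measurableC.
  have PE : P ([set w | U w <= u] `&` [set w | V w <= 1 - u]) =
            P (~` [set w | U w <= u] `&` ~` [set w | V w <= 1 - u]).
    have fin S : measurable S -> (P S < +oo)%E by move=> mS; rewrite -ge0_fin_numE// fin_num_measure.
    have -> : ~` [set w | U w <= u] `&` ~` [set w | V w <= 1 - u] =
              ~` [set w | U w <= u] `\` [set w | V w <= 1 - u].
      by rewrite setDE.
    rewrite measureD//; last 2 first.
      exact: measurableC.
      by apply: fin; exact: measurableC.
    have -> : ~` [set w | U w <= u] `&` [set w | V w <= 1 - u] =
              [set w | V w <= 1 - u] `\` [set w | U w <= u].
      by rewrite setDE setIC.
    rewrite measureD// ?fin//.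
    have -> : ~` [set w | U w <= u] = setT `\` [set w | U w <= u] by rewrite setTD.
    rewrite measureD// ?fin// setTI [in LHS]setIC.
    have gen (a b c e : \bar R) : a = 1%E -> b = (c01 u)%:E -> c = (c01 (1 - u))%:E ->
        e \is a fin_num -> e = (a - b - (c - e))%E.
      move=> -> -> -> /fineK <-; rewrite -!EFinB; congr (_%:E).
      have := c01_sym u; lra.
    apply: gen.
    - exact: probability_setT.
    - exact: K1 cX u.
    - exact: K1 cY (1 - u).
    - by rewrite fin_num_measure//; exact: measurableI.
  have [h1|h1] := pselect (exists w, ([set w | U w <= u] `&` [set w | V w <= 1 - u]) w /\ ~ N w).
    have [h2|h2] := pselect (exists w, (~` [set w | U w <= u] `&` ~` [set w | V w <= 1 - u]) w /\ ~ N w).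
      exfalso; case: h1 => w1 [[/= U1 V1] N1]; case: h2 => w2 [[/= U2 V2] N2].
      case: (cA _ _ (AN _ N1) (AN _ N2)) => /= [[_ y21]|[x21 _]].
        by apply: V2; rewrite (le_trans (F_nd Y y21)).
      by apply: U2; rewrite (le_trans (F_nd X x21)).
    have n2 : P.-negligible (~` [set w | U w <= u] `&` ~` [set w | V w <= 1 - u]).
      by exists N; split => // w E2w; apply/not_notP => Nw; apply: h2; exists w.
    split => //; apply/negligibleP => //; apply: (etrans PE); exact/negligibleP.
  have n1 : P.-negligible ([set w | U w <= u] `&` [set w | V w <= 1 - u]).
    by exists N; split => // w E1w; apply/not_notP => Nw; apply: h1; exists w.
  split => //; apply/negligibleP => //; apply: (etrans (esym PE)); exact/negligibleP.
split; apply: negl_lt => q.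
  apply: (negligibleS _ (claim (ratr q)).1) => w /= /andP[Uq qV]; split.
    exact: ltW.
  by rewrite lerBrDr -lerBrDl ltW.
apply: (negligibleS _ (claim (ratr q)).2) => w /= /andP[Vq qU]; split.
  by apply/negP; rewrite -ltNge.
by apply/negP; rewrite -ltNge ltrBlDr -ltrBlDl.
Qed.
End A.

Section Final.
Context {R : realType} {d : measure_display} {T : measurableType d} (P : probability T R).
Local Notation leb := (@lebesgue_measure R).

Lemma bnd01 (f : R -> R) : {within `[0, 1], continuous f} ->
  exists M, forall x, x \in `[0, 1] -> `|f x| <= M.
Proof.
move=> cf.
have [c1 _ h1] := EVT_max ler01 cf.
have [c2 _ h2] := EVT_min ler01 cf.
exists (`|f c1| + `|f c2|) => x x01.
have := h1 _ x01; have := h2 _ x01.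
have := ler_norm (f c1); have := ler_norm (- f c2); rewrite normrN.
have := normr_ge0 (f c1); have := normr_ge0 (f c2).
move=> ? ? ? ? ? ?; rewrite ler_norml; apply/andP; split; lra.
Qed.

Lemma mcomp01 (h : R -> R) (W : T -> R) : measurable_fun (`[0, 1] : set R) h ->
  measurable_fun setT W -> (forall w, W w \in `[0, 1]) ->
  measurable_fun setT (fun w => h (W w)).
Proof.
move=> mh mW W01.
have sub : W @` setT `<=` (`[0, 1] : set R).
  by move=> _ [w _ <-]; have := W01 w; rewrite inE.
exact: (measurable_comp (measurable_itv _) sub mh mW).
Qed.

Lemma mUZ (Z : {RV P >-> R}) : continuous (F_ Z) ->
  measurable_fun setT (fun w => F_ Z (Z w)).
Proof.
move=> cZ; apply: measurableT_comp => //.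
exact: measurable_realfun.continuous_measurable_fun.
Qed.

Lemma E_ae (f g : T -> R) : measurable_fun setT f -> measurable_fun setT g ->
  P.-negligible [set w | f w <> g w] -> ('E_P[f] = 'E_P[g])%E.
Proof.
move=> mf mg Ng; rewrite unlock; apply: ae_eq_integral => //.
- exact: (proj2 (measurable_realfun.measurable_EFinP _ _) mf).
- exact: (proj2 (measurable_realfun.measurable_EFinP _ _) mg).
- apply: negligibleS Ng => w /= h fg; apply: h => _.
  by rewrite fg.
Qed.

Lemma cov0 (f g : T -> R) : fine ('E_P[f])%E = 0 -> fine ('E_P[g])%E = 0 ->
  covariance P f g = ('E_P[fun w => (f w * g w)%R])%E.
Proof.
move=> hf hg; rewrite unlock hf hg; congr (expectation _ _).
by apply/funext => w; rewrite /GRing.mul/= !subr0.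
Qed.
End Final.

Local Close Scope classical_set_scope.
Unset Implicit Arguments.

Theorem proposition3 (R : realType) (B : nat -> R -> R)
  (d : measure_display) (T : measurableType d) (P : probability T R)
  (X Y : {RV P >-> R}) :
  natural_basis B -> continuous_rv X -> continuous_rv Y ->
  (comonotonic X Y ->
     forall j k : nat, (0 < j)%N -> (0 < k)%N ->
       basis_corr B j k X Y = (j == k)%:R) /\
  (countermonotonic X Y ->
     forall j k : nat, (0 < j)%N -> (0 < k)%N ->
       basis_corr B j k X Y = (-1) ^+ j * (j == k)%:R).
Proof.
move=> [[[L2 [orth [_ B0]]] reg] nat] cX cY.
have mB j : measurable_fun (`[0%R, 1%R]%classic : set R) (B j) := (L2 j).1.
have bB j : (0 < j)%N -> exists M, forall x, x \in `[0, 1] -> `|B j x| <= M.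
  by move=> j0; apply: bnd01; exact: ((reg j j0).2).1.
have symB j : (0 < j)%N -> forall u, u \in `[0, 1] -> B j (1 - u) = (-1) ^+ j * B j u.
  by move=> j0; exact: ((nat j j0).2).2.
have U01 (Z : {RV P >-> R}) w : F_ Z (Z w) \in `[0, 1].
  by rewrite in_itv/= F_ge0 F_le1.
have bBB j k : (0 < j)%N -> (0 < k)%N -> exists M,
    forall x, x \in `[0, 1] -> `|B j x * B k x| <= M.
  move=> j0 k0; have [Mj hj] := bB j j0; have [Mk hk] := bB k k0.
  exists (Mj * Mk) => x x01; rewrite normrM ler_pM//.
    exact: hj.
  exact: hk.
have mBB j k : measurable_fun (`[0%R, 1%R]%classic : set R) (fun x => B j x * B k x).
  exact: measurable_realfun.measurable_funM.
have mean (Z : {RV P >-> R}) (cZ : continuous (F_ Z)) j : (0 < j)%N ->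
    fine ('E_P[fun w => B j (F_ Z (Z w))])%E = 0.
  move=> j0; have [M hM] := bB j j0; rewrite (K5 cZ (mB j) hM).
  transitivity (inner01 (B j) (B 0)); last by rewrite orth; case: (j) j0.
  rewrite /inner01 /Rintegral; congr fine; apply: eq_integral => x; rewrite inE => x01.
  by rewrite B0 ?mulr1.
have prodE (Z : {RV P >-> R}) (cZ : continuous (F_ Z)) j k : (0 < j)%N -> (0 < k)%N ->
    fine ('E_P[fun w => (B j (F_ Z (Z w)) * B k (F_ Z (Z w)))%R])%E = (j == k)%:R.
  move=> j0 k0; have [M hM] := bBB j k j0 k0.
  by rewrite (K5 cZ (mBB j k) hM) -orth.
have var (Z : {RV P >-> R}) (cZ : continuous (F_ Z)) j : (0 < j)%N ->
    fine ('V_P[fun w => B j (F_ Z (Z w))]) = 1.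
  by move=> j0; rewrite /variance cov0 ?mean// prodE// eqxx.
have mUB (Z : {RV P >-> R}) (cZ : continuous (F_ Z)) j :
    measurable_fun setT (fun w => B j (F_ Z (Z w))).
  by apply: mcomp01; [exact: mB | exact: mUZ | exact: U01].
split.
- move=> co j k j0 k0.
  have [n1 n2] := comon_negl cX cY co.
  rewrite /basis_corr /pearson !var// mulr1 sqrtr1 divr1.
  rewrite cov0 ?mean//.
  rewrite (@E_ae _ _ _ _ _ (fun w => B j (F_ X (X w)) * B k (F_ X (X w)))).
  + exact: prodE.
  + exact: (measurable_realfun.measurable_funM (mUB X cX j) (mUB Y cY k)).
  + exact: (measurable_realfun.measurable_funM (mUB X cX j) (mUB X cX k)).
  + apply: negligibleS (negligibleU n1 n2) => w /= h.
    have : F_ X (X w) != F_ Y (Y w) by apply/eqP => e; apply: h; rewrite e.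
    by rewrite neq_lt => /orP[l|l]; [left|right].
- move=> co j k j0 k0.
  have [n1 n2] := counter_negl cX cY co.
  rewrite /basis_corr /pearson !var// mulr1 sqrtr1 divr1.
  rewrite cov0 ?mean//.
  rewrite (@E_ae _ _ _ _ _ (fun w => (-1) ^+ k * (B j (F_ X (X w)) * B k (F_ X (X w))))).
  + have [M hM] := bBB j k j0 k0.
    have mg : measurable_fun (`[0%R, 1%R]%classic : set R)
        (fun x => (-1) ^+ k * (B j x * B k x)).
      exact: (measurable_realfun.measurable_funM (measurable_cst _) (mBB j k)).
    have hg x : x \in `[0, 1] -> `|(-1) ^+ k * (B j x * B k x)| <= M.
      by move=> x01; rewrite normrM normrX normrN1 expr1n mul1r; exact: hM.
    rewrite (K5 cX mg hg).
    have m01 : measurable (`[0%R, 1%R]%classic : set R) by exact: measurable_itv.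
    have ig : (@lebesgue_measure R).-integrable (`[0%R, 1%R] : set (measurableTypeR R))
        (EFin \o (fun x : measurableTypeR R => B j x * B k x)).
      apply: measurable_bounded_integrable => //.
      * by rewrite [X in (X < _)%E]lebesgue_measure_itv/= lte01 -EFinB ltry.
      * exact: mBB.
      * exists M; split; first exact: num_real.
        by move=> z Mz x /= x01; rewrite (le_trans (hM _ x01))// ltW.
    have m01' : measurable (`[0%R, 1%R] : set (measurableTypeR R)) := measurable_itv _.
    have := RintegralZl ((-1) ^+ k) m01' ig; rewrite /Rintegral => ->.
    rewrite -/(Rintegral _ _ _) -/(inner01 (B j) (B k)) orth.
    by case: eqVneq => [->|_]; rewrite ?mulr0.
  + exact: (measurable_realfun.measurable_funM (mUB X cX j) (mUB Y cY k)).
  + exact: (measurable_realfun.measurable_funM (measurable_cst _)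
      (measurable_realfun.measurable_funM (mUB X cX j) (mUB X cX k))).
  + apply: negligibleS (negligibleU n1 n2) => w /= h.
    have [h1|h1] := pselect (F_ X (X w) < 1 - F_ Y (Y w)); first by left.
    have [h2|h2] := pselect (1 - F_ Y (Y w) < F_ X (X w)); first by right.
    exfalso; apply: h.
    have e : F_ Y (Y w) = 1 - F_ X (X w).
      have : F_ X (X w) = 1 - F_ Y (Y w).
        by apply/eqP; rewrite eq_le !leNgt; apply/andP; split; apply/negP.
      by move=> ->; rewrite subKr.
    by rewrite e symB// mulrCA.
Qed.
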